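(* Let $(X,d)$ be a complete metric space and $T:X\to X$ a map. For $x,y\in X$ define $$P(x,y)=\max\{d(x,Tx)+d(Tx,y),\ d(T^2x,y)+d(T^2x,Ty),\ d(Tx,T^2x)+d(Tx,y),\ d(Tx,y)+d(Tx,Ty),\ d(x,y),\ d(x,Ty),\ d(y,Ty)\},$$ $$Q(x,y)=\max\{d(x,Tx)+d(Tx,T^2x),\ d(x,Tx)+d(Tx,y),\ d(T^2x,Ty)+d(y,Ty),\ d(Tx,T^2x)+d(T^2x,Ty),\ d(x,y),\ d(x,Ty)\}.$$ Suppose there is $\gamma\in[0,1/2)$ such that $d(Tx,Ty)\le\gamma\max\{P(x,y),Q(x,y)\}$ for all $x,y\in X$. Then $T$ is globally strong Picard modulo $d$: for every $x\in X$ the sequence $(T^nx)_{n\ge0}$ converges in $(X,d)$, its limit is a fixed point of $T$, and $T$ has at most one (hence exactly one) fixed point. *)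

(* Defs.v *)
From Stdlib Require Import Reals.
Open Scope R_scope.

Record is_metric {X : Type} (d : X -> X -> R) : Prop := {
  metric_nonneg : forall x y, 0 <= d x y;
  metric_sym    : forall x y, d x y = d y x;
  metric_zero   : forall x y, d x y = 0 <-> x = y;
  metric_tri    : forall x y z, d x z <= d x y + d y z
}.

Definition seq_converges_to {X : Type} (d : X -> X -> R) (u : nat -> X) (l : X) : Prop :=
  forall eps, 0 < eps -> exists N, forall n, (N <= n)%nat -> d (u n) l < eps.

Definition is_cauchy {X : Type} (d : X -> X -> R) (u : nat -> X) : Prop :=
  forall eps, 0 < eps -> exists N, forall m n, (N <= m)%nat -> (N <= n)%nat ->
    d (u m) (u n) < eps.

Definition complete_metric {X : Type} (d : X -> X -> R) : Prop :=
  forall u : nat -> X, is_cauchy d u -> exists l, seq_converges_to d u l.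

Definition iter_map {X : Type} (T : X -> X) (n : nat) (x : X) : X := Nat.iter n T x.

Definition globally_strong_Picard {X : Type} (d : X -> X -> R) (T : X -> X) : Prop :=
  (forall x, exists l, seq_converges_to d (fun n => iter_map T n x) l /\ T l = l) /\
  (forall p q, T p = p -> T q = q -> p = q).

Definition P_fun {X : Type} (d : X -> X -> R) (T : X -> X) (x y : X) : R :=
  Rmax (d x (T x) + d (T x) y)
  (Rmax (d (T (T x)) y + d (T (T x)) (T y))
  (Rmax (d (T x) (T (T x)) + d (T x) y)
  (Rmax (d (T x) y + d (T x) (T y))
  (Rmax (d x y)
  (Rmax (d x (T y))
        (d y (T y))))))).

Definition Q_fun {X : Type} (d : X -> X -> R) (T : X -> X) (x y : X) : R :=
  Rmax (d x (T x) + d (T x) (T (T x)))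
  (Rmax (d x (T x) + d (T x) y)
  (Rmax (d (T (T x)) (T y) + d y (T y))
  (Rmax (d (T x) (T (T x)) + d (T (T x)) (T y))
  (Rmax (d x y)
        (d x (T y)))))).

(* Main.v *)
Require Import Defs.
From Stdlib Require Import Reals Lra Lia Psatz.
Open Scope R_scope.

Lemma geom_cauchy {X : Type} (d : X -> X -> R) (Hmet : is_metric d)
  (u : nat -> X) (C k : R) (HC : 0 <= C) (Hk0 : 0 <= k) (Hk1 : k < 1)
  (Hu : forall n, d (u n) (u (S n)) <= C * k ^ n) : is_cauchy d u.
Proof.
  assert (Hp : forall m p, d (u m) (u (m + p)%nat) <= C * k ^ m * (1 - k ^ p) / (1 - k)).
  { intros m p; induction p as [|p IH].
    - rewrite Nat.add_0_r. replace (C * k ^ m * (1 - k ^ 0) / (1 - k)) with 0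
        by (simpl; field; lra).
      destruct Hmet as [_ _ Hz _]. right. apply Hz. reflexivity.
    - replace (m + S p)%nat with (S (m + p)) by lia.
      eapply Rle_trans. apply (metric_tri d Hmet _ (u (m+p)%nat)).
      eapply Rle_trans. apply Rplus_le_compat. apply IH. apply Hu.
      right. rewrite pow_add. simpl. field. lra. }
  assert (Hb : forall m n, (m <= n)%nat -> d (u m) (u n) <= C * k ^ m / (1 - k)).
  { intros m n Hmn. replace n with (m + (n - m))%nat by lia.
    eapply Rle_trans. apply Hp. unfold Rdiv. apply Rmult_le_compat_r.
    left; apply Rinv_0_lt_compat; lra.
    assert (0 <= k ^ (n - m)) by (apply pow_le; lra).
    assert (0 <= k ^ m) by (apply pow_le; lra).
    assert (0 <= C * k ^ m) by (apply Rmult_le_pos; lra). nra. }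
  intros eps Heps.
  assert (Hk : Rabs k < 1) by (rewrite Rabs_right; lra).
  destruct (pow_lt_1_zero k Hk (eps * (1 - k) / (C + 1))) as [N HN].
  { apply Rdiv_lt_0_compat; nra. }
  exists N. intros m n Hm Hn.
  assert (Hgen : forall m n, (N <= m)%nat -> (m <= n)%nat -> d (u m) (u n) < eps).
  { intros m' n' Hm' Hmn. eapply Rle_lt_trans. apply Hb; auto.
    specialize (HN m' Hm'). rewrite Rabs_right in HN by (apply Rle_ge, pow_le; lra).
    assert (0 <= k ^ m') by (apply pow_le; lra).
    apply Rmult_lt_reg_r with (1 - k). lra.
    replace (C * k ^ m' / (1 - k) * (1 - k)) with (C * k ^ m') by (field; lra).
    apply Rmult_lt_compat_r with (r := C + 1) in HN; [|lra].
    replace (eps * (1 - k) / (C + 1) * (C + 1)) with (eps * (1 - k)) in HN by (field; lra).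
    nra. }
  destruct (Nat.le_ge_cases m n) as [H|H].
  - apply Hgen; auto.
  - rewrite (metric_sym d Hmet). apply Hgen; auto.
Qed.

Theorem theorem4 (X : Type) (d : X -> X -> R) (T : X -> X)
  (Hmet : is_metric d) (Hcomp : complete_metric d)
  (gamma : R) (Hg0 : 0 <= gamma) (Hg1 : gamma < 1/2)
  (Hcontr : forall x y, d (T x) (T y) <= gamma * Rmax (P_fun d T x y) (Q_fun d T x y)) :
  globally_strong_Picard d T.
Proof.
  pose proof (metric_nonneg d Hmet) as Hnn.
  pose proof (metric_sym d Hmet) as Hsym.
  pose proof (metric_tri d Hmet) as Htri.
  assert (Hzero : forall x, d x x = 0) by (intro; apply (metric_zero d Hmet); reflexivity).
  split.
  - intros x.
    set (k := gamma / (1 - gamma)).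
    assert (Hstep : forall y, d (T y) (T (T y)) <= k * d y (T y)).
    { intro y. pose proof (Hcontr y (T y)) as H.
      assert (Hm : Rmax (P_fun d T y (T y)) (Q_fun d T y (T y))
                   <= d y (T y) + d (T y) (T (T y))).
      { pose proof (Htri y (T y) (T (T y))).
        pose proof (Hnn y (T y)). pose proof (Hnn (T y) (T (T y))).
        pose proof (Hsym (T (T y)) (T y)).
        unfold P_fun, Q_fun; rewrite !Hzero;
        repeat apply Rmax_lub; lra. }
      assert (H2 : d (T y) (T (T y)) <= gamma * (d y (T y) + d (T y) (T (T y)))).
      { eapply Rle_trans. apply H. apply Rmult_le_compat_l; lra. }
      unfold k. apply Rmult_le_reg_r with (1 - gamma). lra.
      replace (gamma / (1 - gamma) * d y (T y) * (1 - gamma)) with (gamma * d y (T y))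
        by (field; lra). nra. }
    set (u := fun n => iter_map T n x).
    assert (Hu : forall n, d (u n) (u (S n)) <= d x (T x) * k ^ n).
    { induction n as [|n IH].
      - simpl. unfold u, iter_map. simpl. lra.
      - change (u (S n)) with (T (u n)). change (u (S (S n))) with (T (T (u n))).
        eapply Rle_trans. apply Hstep. change (T (u n)) with (u (S n)).
        assert (0 <= k) by (unfold k, Rdiv; apply Rmult_le_pos; [lra | left; apply Rinv_0_lt_compat; lra]).
        apply (Rmult_le_compat_l k) in IH; auto.
        eapply Rle_trans. exact IH. right. simpl. ring. }
    assert (Hk0 : 0 <= k) by (unfold k, Rdiv; apply Rmult_le_pos; [lra | left; apply Rinv_0_lt_compat; lra]).
    assert (Hk1 : k < 1).
    { unfold k. apply Rmult_lt_reg_r with (1 - gamma). lra.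
      replace (gamma / (1 - gamma) * (1 - gamma)) with gamma by (field; lra). lra. }
    destruct (Hcomp u (geom_cauchy d Hmet u _ _ (Hnn _ _) Hk0 Hk1 Hu)) as [z Hz].
    exists z. split. exact Hz.
    
    assert (HD : forall eps, 0 < eps -> (d z (T z)) * (1 - 2 * gamma) <= eps * (1 + 4 * gamma)).
    { intros eps Heps. destruct (Hz eps Heps) as [N HN].
      pose proof (HN N (le_n _)) as e1.
      pose proof (HN (S N) (le_S _ _ (le_n _))) as e2.
      pose proof (HN (S (S N)) (le_S _ _ (le_S _ _ (le_n _)))) as e3.
      change (u (S N)) with (T (u N)) in e2.
      change (u (S (S N))) with (T (T (u N))) in e3.
      set (a := u N) in *.
      assert (Hm : Rmax (P_fun d T a z) (Q_fun d T a z) <= 2 * (d z (T z)) + 4 * eps).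
      { pose proof (Htri a z (T a)). pose proof (Hsym (T a) z).
        pose proof (Htri (T (T a)) z (T z)). pose proof (Htri (T a) z (T z)).
        pose proof (Htri a z (T z)). pose proof (Htri (T a) z (T (T a))).
        pose proof (Hsym (T (T a)) z).
        pose proof (Hnn a z). pose proof (Hnn (T a) z). pose proof (Hnn (T (T a)) z).
        pose proof (Hnn z (T z)).
        unfold P_fun, Q_fun; repeat apply Rmax_lub; lra. }
      pose proof (Hcontr a z) as Hc.
      assert (gamma * Rmax (P_fun d T a z) (Q_fun d T a z) <= gamma * (2 * (d z (T z)) + 4 * eps))
        by (apply Rmult_le_compat_l; lra).
      pose proof (Htri z (T a) (T z)). pose proof (Hsym z (T a)).
      nra. }
    pose proof (Hnn z (T z)) as HDn.
    destruct (Req_dec (d z (T z)) 0) as [H0|H0].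
    + symmetry. apply (metric_zero d Hmet). exact H0.
    + exfalso.
      assert (HDp : 0 < (d z (T z))) by lra.
      specialize (HD ((d z (T z)) * (1 - 2 * gamma) / (2 * (1 + 4 * gamma)))).
      assert (Hpos : 0 < (d z (T z)) * (1 - 2 * gamma) / (2 * (1 + 4 * gamma))).
      { apply Rdiv_lt_0_compat; nra. }
      specialize (HD Hpos).
      replace ((d z (T z)) * (1 - 2 * gamma) / (2 * (1 + 4 * gamma)) * (1 + 4 * gamma))
        with ((d z (T z)) * (1 - 2 * gamma) / 2) in HD by (field; lra).
      nra.
  - intros p q Hp Hq.
    pose proof (Hcontr p q) as H. rewrite Hp, Hq in H.
    assert (Hm : Rmax (P_fun d T p q) (Q_fun d T p q) <= 2 * d p q).
    { pose proof (Hnn p q). unfold P_fun, Q_fun. rewrite !Hp, !Hq, !Hzero.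
      repeat apply Rmax_lub; lra. }
    assert (gamma * Rmax (P_fun d T p q) (Q_fun d T p q) <= gamma * (2 * d p q))
      by (apply Rmult_le_compat_l; lra).
    pose proof (Hnn p q).
    apply (metric_zero d Hmet). nra.
Qed.
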